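(* For every SaSTL formula $\varphi$ (as defined in the context), every spatio-temporal signal $\omega$, every time $t\in\mathbb{T}$ and every location $l\in L$: \[ \rho(\varphi,\omega,t,l)>0 \;\Longrightarrow\; (\omega,t,l)\models\varphi, \qquad \rho(\varphi,\omega,t,l)<0 \;\Longrightarrow\; (\omega,t,l)\not\models\varphi . \]
   Context: Time domain $\mathbb{T}=\mathbb{R}_{\ge 0}$. $L$ is a finite nonempty set of locations. $G=(L,E,\eta)$ is a weighted undirected graph with edge weights $\eta:E\to\mathbb{R}_{\ge0}$; the distance $d(l,l')$ is the minimum, over all paths $\sigma$ between $l$ and $l'$, of $\sum_{e\in\sigma}\eta(e)$ (and $+\infty$ if there is no path). $X=\{x_1,\dots,x_n\}$ is a set of signal variables. A spatio-temporal signal is a function $\omega:\mathbb{T}\times L\to\mathbb{R}^n$; $\pi_{x}(\omega)[t,l]\in\mathbb{R}$ denotes its component for variable $x\in X$ at time $t$ and location $l$. $P$ is a finite set of propositions and $\mathcal{L}:L\to 2^P$ a labeling. Location formulas are $\psi::=\top\mid p\mid\neg\psi\mid\psi\vee\psi$ ($p\in P$), with $\mathcal{L}(l)\models\psi$ defined in the usual propositional way. A spatial domain is $\mathcal{D}=([d_1,d_2],\psi)$ with $0\le d_1\le d_2\le+\infty$. For $l\in L$ let $L^l_{\mathcal{D}}=\{l'\in L: d_1\le d(l,l')\le d_2,\ \mathcal{L}(l')\models\psi\}$. Standing assumption: for every spatial domain $\mathcal{D}$ occurring in the formula and every $l\in L$, $L^l_{\mathcal{D}}\neq\emptyset$. Let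 $\alpha^x_{\mathcal{D}}(\omega,t,l)$ be the (nonempty, finite) multiset $\{\pi_x(\omega)[t,l'] : l'\in L^l_{\mathcal{D}}\}$, and for $\mathrm{op}\in\{\max,\min,\mathrm{sum},\mathrm{avg}\}$ let $\mathrm{op}(\cdot)$ be its maximum, minimum, sum, or arithmetic mean. SaSTL syntax: $\varphi::= x>c \mid \neg\varphi\mid \varphi_1\wedge\varphi_2\mid\varphi_1\vee\varphi_2\mid \varphi_1\,\mathcal{U}_I\,\varphi_2\mid \mathcal{A}^{\mathrm{op}}_{\mathcal{D}}x>c\mid \mathcal{C}^{\mathrm{op}}_{\mathcal{D}}\varphi>c$, where $x\in X$, $c\in\mathbb{R}$, $I\subseteq\mathbb{R}_{>0}$ is a nonempty interval, $\mathrm{op}\in\{\max,\min,\mathrm{sum},\mathrm{avg}\}$. For counting formulas $\mathcal{C}^{\mathrm{op}}_{\mathcal{D}}\varphi>c$ it is assumed that $0\le c<1$ if $\mathrm{op}\in\{\max,\min,\mathrm{avg}\}$ and $0\le c<|L^l_{\mathcal{D}}|$ for all $l\in L$ if $\mathrm{op}=\mathrm{sum}$. Boolean semantics: $(\omega,t,l)\models x>c$ iff $\pi_x(\omega)[t,l]>c$; $\neg,\wedge,\vee$ as usual; $(\omega,t,l)\models\varphi_1\mathcal{U}_I\varphi_2$ iff there is $t'\in(t+I)\cap\mathbb{T}$ with $(\omega,t',l)\models\varphi_2$ and $(\omega,t'',l)\models\varphi_1$ for all $t''\in(t,t')$ (open interval); $(\omega,t,l)\models\mathcal{A}^{\mathrm{op}}_{\mathcal{D}}x>c$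 iff $\mathrm{op}(\alpha^x_{\mathcal{D}}(\omega,t,l))>c$; $(\omega,t,l)\models\mathcal{C}^{\mathrm{op}}_{\mathcal{D}}\varphi>c$ iff $\mathrm{op}(\{g(l'):l'\in L^l_{\mathcal{D}}\})>c$ (multiset), where $g(l')=1$ if $(\omega,t,l')\models\varphi$ and $g(l')=0$ otherwise. Quantitative semantics (robustness, values in $\mathbb{R}\cup\{\pm\infty\}$, with $\inf\emptyset=+\infty$): $\rho(x>c,\omega,t,l)=\pi_x(\omega)[t,l]-c$; $\rho(\neg\varphi)=-\rho(\varphi)$; $\rho(\varphi_1\wedge\varphi_2)=\min\{\rho(\varphi_1),\rho(\varphi_2)\}$; $\rho(\varphi_1\vee\varphi_2)=\max\{\rho(\varphi_1),\rho(\varphi_2)\}$ (all at the same $\omega,t,l$); $\rho(\varphi_1\mathcal{U}_I\varphi_2,\omega,t,l)=\sup_{t'\in(t+I)\cap\mathbb{T}}\min\{\rho(\varphi_2,\omega,t',l),\ \inf_{t''\in(t,t')}\rho(\varphi_1,\omega,t'',l)\}$; $\rho(\mathcal{A}^{\mathrm{sum}}_{\mathcal{D}}x>c,\omega,t,l)=\big(\mathrm{sum}(\alpha^x_{\mathcal{D}}(\omega,t,l))-c\big)/|\alpha^x_{\mathcal{D}}(\omega,t,l)|$ and $\rho(\mathcal{A}^{\mathrm{op}}_{\mathcal{D}}x>c,\omega,t,l)=\mathrm{op}(\alpha^x_{\mathcal{D}}(\omega,t,l))-c$ for $\mathrm{op}\in\{\max,\min,\mathrm{avg}\}$. For counting,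 let $R=\{\rho(\varphi,\omega,t,l'):l'\in L^l_{\mathcal{D}}\}$ (multiset) and let $\delta(k,R)$ denote the $k$-th largest element of $R$ counted with multiplicity; then $\rho(\mathcal{C}^{\max}_{\mathcal{D}}\varphi>c)=\max R$, $\rho(\mathcal{C}^{\min}_{\mathcal{D}}\varphi>c)=\min R$, $\rho(\mathcal{C}^{\mathrm{sum}}_{\mathcal{D}}\varphi>c)=\delta(\lfloor c\rfloor+1,R)$, $\rho(\mathcal{C}^{\mathrm{avg}}_{\mathcal{D}}\varphi>c)=\delta(\lfloor c\,|L^l_{\mathcal{D}}|\rfloor+1,R)$. *)

(* Defs.v *)
From HB Require Import structures.
From mathcomp Require Import all_boot all_order all_algebra.
From mathcomp Require Import all_classical all_reals.
From mathcomp Require Import ereal.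
Set Implicit Arguments. Unset Strict Implicit. Unset Printing Implicit Defensive.
Import Order.TTheory GRing.Theory Num.Theory.
Local Open Scope ring_scope.
Local Open Scope classical_set_scope.

Inductive aop := OpMax | OpMin | OpSum | OpAvg.

Inductive lform (P : Type) :=
| LTop
| LProp of P
| LNeg of lform P
| LOr of lform P & lform P.

Fixpoint lsat (P : Type) (lbl : P -> bool) (psi : lform P) : bool :=
  match psi with
  | LTop => true
  | LProp p => lbl p
  | LNeg q => ~~ lsat lbl q
  | LOr q1 q2 => lsat lbl q1 || lsat lbl q2
  end.

(* Spatial domain D = ([d1, d2], psi), with d1, d2 in [0, +oo] *)
Record sdomain (R : realType) (P : Type) := SDom {
  sd_d1 : \bar R; sd_d2 : \bar R; sd_psi : lform P }.

Inductive sform (R : realType) (P : Type) (n : nat) :=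
| FGt of 'I_n & R
| FNot of sform R P n
| FAnd of sform R P n & sform R P n
| FOr of sform R P n & sform R P n
| FUntil of interval R & sform R P n & sform R P n
| FAgg of aop & sdomain R P & 'I_n & R               (* A^op_D x > c *)
| FCount of aop & sdomain R P & sform R P n & R.      (* C^op_D phi > c *)

Definition seqmax d (T : orderType d) (x0 : T) (s : seq T) : T :=
  \big[Order.max/head x0 s]_(x <- s) x.
Definition seqmin d (T : orderType d) (x0 : T) (s : seq T) : T :=
  \big[Order.min/head x0 s]_(x <- s) x.

Definition aggr (R : realType) (op : aop) (s : seq R) : R :=
  match op with
  | OpMax => seqmax 0 s
  | OpMin => seqmin 0 s
  | OpSum => \sum_(x <- s) x
  | OpAvg => (\sum_(x <- s) x) / (size s)%:R
  end.

(* delta(k, s): k-th largest element (k >= 1) counted with multiplicity *)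
Definition kth_largest (R : realType) (k : nat) (s : seq (\bar R)) : \bar R :=
  nth -oo%E (sort (fun a b : \bar R => (b <= a)%E) s) k.-1.

Section Semantics.
Variables (R : realType) (L : finType) (E : rel L) (eta : L -> L -> R).
Variables (P : Type) (lab : L -> P -> bool) (n : nat).
(* spatio-temporal signal: omega t l x = pi_x(omega)[t,l] *)
Variable omega : R -> L -> 'I_n -> R.

(* weight of the path l = a_0, a_1, ..., a_k (given as a :: p) *)
Fixpoint path_weight (a : L) (p : seq L) : R :=
  match p with
  | [::] => 0
  | b :: q => eta a b + path_weight b q
  end.

(* graph distance: min (= inf, attained) of path weights; +oo if no path *)
Definition dist (l l' : L) : \bar R :=
  ereal_inf [set (path_weight l p)%:E | p in [set p | path E l p /\ last l p = l']].

(* L^l_D as a duplicate-free sequence of locations *)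
Definition locs (D : sdomain R P) (l : L) : seq L :=
  [seq l' <- enum L | [&& (sd_d1 D <= dist l l')%E, (dist l l' <= sd_d2 D)%E
                        & lsat (lab l') (sd_psi D)]].

Definition alpha (D : sdomain R P) (x : 'I_n) (t : R) (l : L) : seq R :=
  [seq omega t l' x | l' <- locs D l].

Definition tshift (J : interval R) (t : R) : set R :=
  [set t' | t' - t \in J /\ 0 <= t'].

Fixpoint sat (phi : sform R P n) (t : R) (l : L) {struct phi} : Prop :=
  match phi with
  | FGt x c => c < omega t l x
  | FNot f => ~ sat f t l
  | FAnd f g => sat f t l /\ sat g t l
  | FOr f g => sat f t l \/ sat g t l
  | FUntil J f g => exists2 t', tshift J t t' &
       (sat g t' l /\ forall t'', t < t'' < t' -> sat f t'' l)
  | FAgg op D x c => c < aggr op (alpha D x t l)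
  | FCount op D f c =>
       c < aggr op [seq (if `[< sat f t l' >] then 1 else 0) | l' <- locs D l]
  end.

Fixpoint rob (phi : sform R P n) (t : R) (l : L) {struct phi} : \bar R :=
  match phi with
  | FGt x c => (omega t l x - c)%:E
  | FNot f => (- rob f t l)%E
  | FAnd f g => Order.min (rob f t l) (rob g t l)
  | FOr f g => Order.max (rob f t l) (rob g t l)
  | FUntil J f g =>
      ereal_sup [set Order.min (rob g t' l)
                   (ereal_inf [set rob f t'' l | t'' in [set t'' | t < t'' < t']])
                | t' in tshift J t]
  | FAgg OpSum D x c =>
      ((\sum_(v <- alpha D x t l) v - c) / (size (alpha D x t l))%:R)%:E
  | FAgg op D x c => (aggr op (alpha D x t l) - c)%:E
  | FCount op D f c =>
      let Rs := [seq rob f t l' | l' <- locs D l] in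
      match op with
      | OpMax => seqmax -oo%E Rs
      | OpMin => seqmin +oo%E Rs
      | OpSum => kth_largest (Num.truncn c).+1 Rs
      | OpAvg => kth_largest (Num.truncn (c * (size (locs D l))%:R)).+1 Rs
      end
  end.

Definition dom_ok (D : sdomain R P) : Prop :=
  (0 <= sd_d1 D)%E /\ (sd_d1 D <= sd_d2 D)%E /\ forall l, locs D l != [::].

Fixpoint wf (phi : sform R P n) : Prop :=
  match phi with
  | FGt _ _ => True
  | FNot f => wf f
  | FAnd f g | FOr f g => wf f /\ wf g
  | FUntil J f g => (exists x, x \in J) /\ (forall x, x \in J -> 0 < x) /\ wf f /\ wf g
  | FAgg _ D _ _ => dom_ok D
  | FCount op D f c => dom_ok D /\ wf f /\
      match op with
      | OpSum => 0 <= c /\ forall l, c < (size (locs D l))%:R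
      | _ => 0 <= c < 1
      end
  end.

End Semantics.

(* Main.v *)
Require Import Defs.
From HB Require Import structures.
From mathcomp Require Import all_boot all_order all_algebra.
From mathcomp Require Import all_classical all_reals.
From mathcomp Require Import ereal.
Import Order.TTheory GRing.Theory Num.Theory.
Local Open Scope ring_scope.


Lemma bigmax_in d (T : orderType d) (idx : T) (s : seq T) :
  \big[Order.max/idx]_(x <- s) x \in idx :: s.
Proof.
elim: s => [|a s IH]; first by rewrite big_nil mem_head.
rewrite big_cons; case: (leP a (\big[Order.max/idx]_(x <- s) x)) => _.
- move: IH; rewrite !inE => /orP[->|->]; rewrite ?orbT //.
- by rewrite !inE eqxx orbT.
Qed.

Lemma bigmin_in d (T : orderType d) (idx : T) (s : seq T) :
  \big[Order.min/idx]_(x <- s) x \in idx :: s.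
Proof.
elim: s => [|a s IH]; first by rewrite big_nil mem_head.
rewrite big_cons; case: (leP a (\big[Order.min/idx]_(x <- s) x)) => _.
- by rewrite !inE eqxx orbT.
- move: IH; rewrite !inE => /orP[->|->]; rewrite ?orbT //.
Qed.

Lemma bigmax_ub d (T : orderType d) (idx : T) (s : seq T) x :
  x \in s -> (x <= \big[Order.max/idx]_(y <- s) y)%O.
Proof.
elim: s => [|a s IH] //; rewrite inE big_cons le_max => /orP[/eqP->|/IH->];
  by rewrite ?lexx ?orbT.
Qed.

Lemma bigmin_lb d (T : orderType d) (idx : T) (s : seq T) x :
  x \in s -> (\big[Order.min/idx]_(y <- s) y <= x)%O.
Proof.
elim: s => [|a s IH] //; rewrite inE big_cons ge_min => /orP[/eqP->|/IH->];
  by rewrite ?lexx ?orbT.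
Qed.

Lemma seqmax_in d (T : orderType d) (x0 : T) s : seqmax x0 s \in x0 :: s.
Proof.
have := @bigmax_in d T (head x0 s) s; rewrite /seqmax.
case: s => [|a s] //=; rewrite !inE => /orP[->|->]; rewrite ?orbT //.
Qed.

Lemma seqmin_in d (T : orderType d) (x0 : T) s : seqmin x0 s \in x0 :: s.
Proof.
have := @bigmin_in d T (head x0 s) s; rewrite /seqmin.
case: s => [|a s] //=; rewrite !inE => /orP[->|->]; rewrite ?orbT //.
Qed.

Lemma seqmin_in' d (T : orderType d) (x0 : T) s : s != [::] -> seqmin x0 s \in s.
Proof.
have := @bigmin_in d T (head x0 s) s; rewrite /seqmin.
case: s => [|a s] //=; rewrite !inE => /orP[/eqP->|->] //; rewrite ?eqxx ?orbT //.
Qed.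

Lemma sum01 (R : numDomainType) T (s : seq T) (b : pred T) :
  \sum_(x <- [seq (if b l then 1 else 0) | l <- s]) x = (count b s)%:R :> R.
Proof.
elim: s => [|a s IH]; first by rewrite big_nil.
by rewrite /= big_cons IH natrD; case: (b a); rewrite ?add0r.
Qed.

Section Kth.
Variable R : realType.
Local Open Scope ereal_scope.
Let ge := fun a b : \bar R => b <= a.
Lemma ge_total : total ge. Proof. by move=> a b; rewrite /ge orbC le_total. Qed.
Lemma ge_trans : transitive ge. Proof. by move=> a b c /= h1 h2; apply: le_trans h2 h1. Qed.
Lemma ge_refl : reflexive ge. Proof. by move=> a; rewrite /ge lexx. Qed.

Lemma kth_gt (k : nat) (s : seq (\bar R)) :
  0 < kth_largest k.+1 s -> (k < count (fun x : \bar R => (0 < x)%E) s)%N.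
Proof.
rewrite /kth_largest /= => H.
set srt := sort _ s in H.
have Hs : sorted ge srt by apply: sort_sorted; exact: ge_total.
have Hp : perm_eq srt s by apply/permPl; apply: perm_sort.
move/seq.permP: Hp => Hp; rewrite -Hp.
have Hk : (k < size srt)%N.
  by rewrite ltnNge; apply/negP => /(nth_default -oo) E; rewrite E in H.
rewrite -(cat_take_drop k.+1 srt) count_cat.
have -> : count (fun x : \bar R => (0 < x)%E) (take k.+1 srt) = k.+1.
  rewrite -{2}(@size_takel k.+1 _ srt) //; apply/eqP; rewrite -all_count.
  apply/(all_nthP -oo) => i.
  rewrite size_takel // => hi; rewrite nth_take //.
  apply: lt_le_trans H _.
  have := sorted_leq_nth ge_trans ge_refl -oo Hs.
  by move=> /(_ i k); rewrite !inE; apply => //; apply: leq_trans hi _.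
by rewrite ltn_addr.
Qed.

Lemma kth_lt (k : nat) (s : seq (\bar R)) :
  kth_largest k.+1 s < 0 -> (count (fun x : \bar R => (0 <= x)%E) s <= k)%N.
Proof.
rewrite /kth_largest /= => H.
set srt := sort _ s in H.
have Hs : sorted ge srt by apply: sort_sorted; exact: ge_total.
have Hp : perm_eq srt s by apply/permPl; apply: perm_sort.
move/seq.permP: Hp => Hp; rewrite -Hp.
case: (leqP (size srt) k) => Hk.
  by apply: leq_trans (count_size _ _) Hk.
rewrite -(cat_take_drop k srt) count_cat.
have -> : count (fun x : \bar R => (0 <= x)%E) (drop k srt) = 0%N.
  apply/eqP; rewrite -leqn0 leqNgt -has_count; apply/negP => /(has_nthP -oo) [i].
  rewrite size_drop nth_drop => hi.
  apply/negP; rewrite -ltNge.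
  apply: le_lt_trans H.
  have := sorted_leq_nth ge_trans ge_refl -oo Hs.
  move=> /(_ k (k + i)%N); rewrite !inE; apply => //; last by rewrite leq_addr.
  by rewrite -ltn_subRL.
by rewrite addn0; apply: leq_trans (count_size _ _) _; rewrite size_take_min geq_minl.
Qed.
End Kth.

Lemma seqmax_ub d (T : orderType d) (x0 : T) s x : x \in s -> (x <= seqmax x0 s)%O.
Proof. exact: bigmax_ub. Qed.
Lemma seqmin_lb d (T : orderType d) (x0 : T) s x : x \in s -> (seqmin x0 s <= x)%O.
Proof. exact: bigmin_lb. Qed.
Arguments seqmax_in {d T}. Arguments seqmin_in {d T}. Arguments seqmin_in' {d T}.
Arguments seqmax_ub {d T}. Arguments seqmin_lb {d T}.

Lemma main_ind (R : realType) (L : finType) (E : rel L) (eta : L -> L -> R)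
  (P : Type) (lab : L -> P -> bool) (n : nat) (omega : R -> L -> 'I_n -> R)
  (phi : sform R P n) : forall t l,
  wf E eta lab phi ->
  ((0 < rob E eta lab omega phi t l)%E -> sat E eta lab omega phi t l) /\
  ((rob E eta lab omega phi t l < 0)%E -> ~ sat E eta lab omega phi t l).
Proof.
elim: phi => [x c|f IH|f IHf g IHg|f IHf g IHg|J f IHf g IHg|op D x c|op D f IH c] t l /=.
- by rewrite !lte_fin subr_gt0 subr_lt0; split => // h1 h2; move: (lt_trans h1 h2); rewrite ltxx.
- move=> /(IH t l)[h1 h2]; rewrite oppe_gt0 oppe_lt0; split => [/h2 //|h3 h4].
  by move: (h1 h3) h4.
- move=> [/(IHf t l)[f1 f2] /(IHg t l)[g1 g2]]; rewrite lt_min gt_min; split.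
    by move=> /andP[/f1 ? /g1 ?].
  by move=> /orP[/f2 h [] //|/g2 h [] //].
- move=> [/(IHf t l)[f1 f2] /(IHg t l)[g1 g2]]; rewrite lt_max gt_max; split.
    by move=> /orP[/f1 ?|/g1 ?]; [left|right].
  by move=> /andP[/f2 ? /g2 ?] [].
- move=> [_ [_ [wff wfg]]]; split.
    move=> /ereal_sup_gt [y [t' ht' <-]]; rewrite lt_min => /andP[hg hinf].
    exists t' => //; split; first exact: (proj1 (IHg t' l wfg)).
    move=> t'' ht''; apply: (proj1 (IHf t'' l wff)); apply: lt_le_trans hinf _.
    by apply: ereal_inf_lbound; exists t''.
  move=> hs [t' ht' [sg sf]].
  have h0 : (0 <= Order.min (rob E eta lab omega g t' l)
     (ereal_inf [set rob E eta lab omega f t'' l | t'' in [set t'' | (t < t'' < t')%R]]))%E.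
    rewrite le_min; apply/andP; split.
      by rewrite leNgt; apply/negP => /(proj2 (IHg t' l wfg)).
    apply: le_ereal_inf_tmp => _ [t'' h <-].
    by rewrite leNgt; apply/negP => /(proj2 (IHf t'' l wff)); apply; apply: sf.
  move: hs; apply/negP; rewrite -leNgt; apply: le_trans h0 _.
  by apply: ereal_sup_ubound; exists t'.
- move=> _; set s := alpha _ _ _ _ _ _ _ _.
  case: op => /=; rewrite ?lte_fin ?subr_gt0 ?subr_lt0;
    try by split=> // h1 h2; move: (lt_trans h2 h1); rewrite ltxx.
  have [->|hN] := eqVneq (size s) 0%N; first by rewrite invr0 mulr0 ltxx.
  have hN' : (0 < (size s)%:R :> R) by rewrite ltr0n lt0n.
  rewrite ltr_pdivlMr // ltr_pdivrMr // !mul0r subr_gt0 subr_lt0.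
  by split=> // h1 h2; move: (lt_trans h2 h1); rewrite ltxx.
- move=> [[_ [_ hne]] [wff hc]].
  set ls := locs E eta lab D l.
  have Hp : forall l', (0 < rob E eta lab omega f t l')%E -> sat E eta lab omega f t l'.
    by move=> l'; apply: (proj1 (IH t l' wff)).
  have Hn : forall l', sat E eta lab omega f t l' -> (0 <= rob E eta lab omega f t l')%E.
    by move=> l' hs; rewrite leNgt; apply/negP => /(proj2 (IH t l' wff)).
  set b := fun l' => `[< sat E eta lab omega f t l' >].
  have -> : [seq (if `[< sat E eta lab omega f t l' >] then 1 else 0) | l' <- ls]
     = [seq (if b l' then 1 else 0) | l' <- ls] :> seq R by [].
  set Rs := [seq rob E eta lab omega f t l' | l' <- ls].
  have cgt : (count (fun x : \bar R => (0 < x)%E) Rs <= count b ls)%N.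
    by rewrite count_map; apply: sub_count => l' /= /Hp /asboolP.
  have cge : (count b ls <= count (fun x : \bar R => (0 <= x)%E) Rs)%N.
    by rewrite count_map; apply: sub_count => l' /= /asboolP /Hn.
  have hls : ls != [::] by apply: hne.
  set gs := [seq (if b l' then 1 else 0) | l' <- ls].
  case: op hc => /= hc.
  +
    case/andP: hc => hc0 hc1; split.
      move=> h; have := seqmax_in -oo%E Rs; rewrite inE => /orP[/eqP e|/mapP[l' hl' e]].
        by rewrite e in h.
      rewrite e in h; have hb : b l' by apply/asboolP; apply: Hp.
      apply: lt_le_trans hc1 _; apply: seqmax_ub; apply/mapP; exists l' => //.
      by rewrite hb.
    move=> h; suff -> : seqmax 0 gs = 0 by move/(le_lt_trans hc0); rewrite ltxx.
    have := seqmax_in 0 gs; rewrite inE => /orP[/eqP //|/mapP[l' hl' ->]].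
    have : ~~ b l'.
      apply/asboolP => /Hn h0.
      have h1 := seqmax_ub -oo%E _ _ (map_f (fun l' => rob E eta lab omega f t l') hl').
      by move: (le_lt_trans (le_trans h0 h1) h); rewrite ltxx.
    by move/negbTE->.
  +
    case/andP: hc => hc0 hc1; split.
      move=> h; have hg : gs != [::] by rewrite -size_eq0 size_map size_eq0.
      have := seqmin_in' 0 gs hg => /mapP[l' hl' ->].
      have hb : b l'.
        apply/asboolP; apply: Hp; apply: lt_le_trans h _; apply: seqmin_lb.
        exact: map_f.
      by rewrite hb.
    move=> h; have := seqmin_in +oo%E Rs; rewrite inE => /orP[/eqP e|/mapP[l' hl' e]].
      by rewrite e in h.
    rewrite e in h.
    have hb : ~~ b l' by apply/asboolP => /Hn h0; move: (le_lt_trans h0 h); rewrite ltxx.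
    move=> hlt; have h1 : seqmin 0 gs <= 0.
      by apply: seqmin_lb; apply/mapP; exists l'; rewrite // (negbTE hb).
    by move: (lt_le_trans hlt (le_trans h1 hc0)); rewrite ltxx.
  +
    case: hc => hc0 _; rewrite /gs sum01; split.
      move/kth_gt => hk; apply: lt_le_trans (truncnS_gt c) _.
      by rewrite ler_nat; exact: leq_trans hk cgt.
    move/kth_lt => hk; apply/negP; rewrite -leNgt.
    apply: le_trans (_ : (Num.truncn c)%:R <= c); last by rewrite truncn_le.
    by rewrite ler_nat; exact: leq_trans cge hk.
  +
    case/andP: hc => hc0 _.
    have hN : 0 < (size ls)%:R :> R by rewrite ltr0n lt0n size_eq0.
    have hc0' : 0 <= c * (size ls)%:R by rewrite mulr_ge0 // ltW.
    rewrite /gs size_map sum01 ltr_pdivlMr //; split.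
      move/kth_gt => hk; apply: lt_le_trans (truncnS_gt _) _.
      by rewrite ler_nat; exact: leq_trans hk cgt.
    move/kth_lt => hk; apply/negP; rewrite -leNgt.
    apply: le_trans (_ : (Num.truncn (c * (size ls)%:R))%:R <= _); last by rewrite truncn_le.
    by rewrite ler_nat; exact: leq_trans cge hk.
Qed.

Theorem theorem1 (R : realType) (L : finType) (E : rel L) (eta : L -> L -> R)
  (P : Type) (lab : L -> P -> bool) (n : nat)
  (hE_sym : symmetric E)
  (heta_sym : forall a b, eta a b = eta b a)
  (heta_ge0 : forall a b, E a b -> 0 <= eta a b)
  (phi : sform R P n) (omega : R -> L -> 'I_n -> R) (t : R) (l : L) :
  wf E eta lab phi -> 0 <= t ->
  ((0 < rob E eta lab omega phi t l)%E -> sat E eta lab omega phi t l) /\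
  ((rob E eta lab omega phi t l < 0)%E -> ~ sat E eta lab omega phi t l).
Proof.
by move=> hwf _; apply: main_ind.
Qed.
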